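(* Let $D\le F\le G$ be locally finite graphs ($D$ a subgraph of $F$, $F$ a subgraph of $G$). Then any two of the following statements imply the third: (1) $D$ is faithful to $F$; (2) $F$ is faithful to $G$; (3) $D$ is faithful to $G$.
   Context: A ray is a one-way infinite path; two rays of a graph $H$ are equivalent in $H$ if for every finite $S\subseteq V(H)$ some component of $H-S$ contains tails of both; the classes are the ends of $H$. A subgraph $A$ of $B$ is faithful to $B$ if (i) every end of $B$ contains a ray of $A$, and (ii) any two rays of $A$ are equivalent in $A$ if and only if they are equivalent in $B$. *)

(* Defs.v *)
From Stdlib Require Import List Arith.
Import ListNotations.

Record graph (V : Type) := Graph {
  gv : V -> Prop;
  ge : V -> V -> Prop;
  ge_sym : forall x y, ge x y -> ge y x;
  ge_irrefl : forall x, ~ ge x x;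
  ge_vert : forall x y, ge x y -> gv x /\ gv y
}.
Arguments gv {V} g x.
Arguments ge {V} g x y.

Definition subgraph {V} (A B : graph V) : Prop :=
  (forall x, gv A x -> gv B x) /\ (forall x y, ge A x y -> ge B x y).

Definition locally_finite {V} (H : graph V) : Prop :=
  forall v, gv H v -> exists l : list V, forall w, ge H v w -> In w l.

Definition is_ray {V} (H : graph V) (r : nat -> V) : Prop :=
  (forall n m, r n = r m -> n = m) /\
  (forall n, gv H (r n)) /\
  (forall n, ge H (r n) (r (S n))).

(* x and y lie in the same component of H - S: joined by a walk in H
   avoiding S *)
Inductive conn_avoid {V} (H : graph V) (S : list V) : V -> V -> Prop :=
| ca_refl : forall x, gv H x -> ~ In x S -> conn_avoid H S x x
| ca_step : forall x y z, ge H x y -> ~ In x S ->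
    conn_avoid H S y z -> conn_avoid H S x z.

Definition same_comp_tails {V} (H : graph V) (S : list V)
  (r1 r2 : nat -> V) : Prop :=
  exists k1 k2, forall n m, k1 <= n -> k2 <= m ->
    conn_avoid H S (r1 n) (r2 m).

Definition ray_equiv {V} (H : graph V) (r1 r2 : nat -> V) : Prop :=
  forall S : list V, (forall x, In x S -> gv H x) ->
    same_comp_tails H S r1 r2.

(* A is faithful to B: (i) every end of B contains a ray of A,
   (ii) rays of A are equivalent in A iff equivalent in B. *)
Definition faithful {V} (A B : graph V) : Prop :=
  (forall R, is_ray B R -> exists R', is_ray A R' /\ ray_equiv B R' R) /\
  (forall R1 R2, is_ray A R1 -> is_ray A R2 ->
     (ray_equiv A R1 R2 <-> ray_equiv B R1 R2)).

(* Main.v *)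
Require Import Defs.
From Stdlib Require Import List Arith Lia Classical.
Import ListNotations.

Section Aux.
Context {V : Type}.

Lemma ca_vert (H : graph V) S x y : conn_avoid H S x y -> gv H x /\ ~ In x S /\ gv H y /\ ~ In y S.
Proof.
  induction 1 as [x Hx Hn|x y z Hxy Hn _ IH]; [tauto|].
  destruct (ge_vert _ H x y Hxy). tauto.
Qed.

Lemma ca_trans (H : graph V) S x y z : conn_avoid H S x y -> conn_avoid H S y z -> conn_avoid H S x z.
Proof.
  induction 1 as [x Hx Hn|x y' w Hxy Hn _ IH]; intro H2; auto.
  eapply ca_step; eauto.
Qed.

Lemma ca_sym (H : graph V) S x y : conn_avoid H S x y -> conn_avoid H S y x.
Proof.
  induction 1 as [x Hx Hn|x y z Hxy Hn Hc IH].
  - now constructor.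
  - apply ca_trans with y; auto.
    destruct (ge_vert _ H x y Hxy) as [Hgx Hgy].
    destruct (ca_vert _ _ _ _ Hc) as [_ [Hny _]].
    eapply ca_step; [apply ge_sym; exact Hxy| exact Hny|]. now constructor.
Qed.

Lemma re_sym (H : graph V) r1 r2 : ray_equiv H r1 r2 -> ray_equiv H r2 r1.
Proof.
  intros E S HS. destruct (E S HS) as [k1 [k2 Hk]].
  exists k2, k1. intros n m Hn Hm. apply ca_sym, Hk; auto.
Qed.

Lemma re_trans (H : graph V) r1 r2 r3 : ray_equiv H r1 r2 -> ray_equiv H r2 r3 -> ray_equiv H r1 r3.
Proof.
  intros E1 E2 S HS. destruct (E1 S HS) as [k1 [k2 Hk]].
  destruct (E2 S HS) as [k2' [k3 Hk']].
  exists k1, k3. intros n m Hn Hm.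
  apply ca_trans with (r2 (Nat.max k2 k2')).
  - apply Hk; lia.
  - apply Hk'; lia.
Qed.

Lemma filter_ex (P : V -> Prop) (S : list V) : exists S', forall x, In x S' <-> In x S /\ P x.
Proof.
  induction S as [|a S IH].
  - exists []. simpl. tauto.
  - destruct IH as [S' HS']. destruct (classic (P a)) as [Pa|nPa].
    + exists (a :: S'). intro x. simpl. rewrite HS'. split; [intros [<-|?]; tauto|].
      intros [[<-|?] ?]; tauto.
    + exists S'. intro x. simpl. rewrite HS'. split; [tauto|].
      intros [[<-|?] ?]; tauto.
Qed.

Lemma re_mono (A B : graph V) r1 r2 : subgraph A B -> ray_equiv A r1 r2 -> ray_equiv B r1 r2.
Proof.
  intros [Sv Se] E S HS.
  destruct (filter_ex (gv A) S) as [S' HS'].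
  assert (HS'A : forall x, In x S' -> gv A x) by (intros x Hx; apply HS' in Hx; tauto).
  destruct (E S' HS'A) as [k1 [k2 Hk]]. exists k1, k2. intros n m Hn Hm.
  specialize (Hk n m Hn Hm). clear - Hk HS' Sv Se.
  induction Hk as [x Hx Hn|x y z Hxy Hn _ IH].
  - constructor; auto. intro HI. apply Hn, HS'. auto.
  - eapply ca_step; [apply Se; eauto| |exact IH].
    intro HI. apply Hn, HS'. split; auto. exact (proj1 (ge_vert _ A x y Hxy)).
Qed.

Lemma ray_mono (A B : graph V) r : subgraph A B -> is_ray A r -> is_ray B r.
Proof.
  intros [Sv Se] [H1 [H2 H3]]. split; [|split]; auto.
Qed.

End Aux.

Theorem lemma5 (V : Type) (D F G : graph V) :
  locally_finite D -> locally_finite F -> locally_finite G ->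
  subgraph D F -> subgraph F G ->
  ((faithful D F /\ faithful F G -> faithful D G) /\
   (faithful D F /\ faithful D G -> faithful F G) /\
   (faithful F G /\ faithful D G -> faithful D F)).
Proof.
  intros _ _ _ SDF SFG.
  assert (SDG : subgraph D G).
  { destruct SDF as [a b], SFG as [c d]. split; auto. }
  split; [|split].
  - intros [[DF1 DF2] [FG1 FG2]]. split.
    + intros R HR. destruct (FG1 R HR) as [R' [HR' E']].
      destruct (DF1 R' HR') as [R'' [HR'' E'']].
      exists R''. split; [exact HR''|]. eapply re_trans; [|exact E'].
      exact (re_mono _ _ _ _ SFG E'').
    + intros R1 R2 H1 H2. rewrite DF2 by auto.
      apply FG2; eapply ray_mono; eauto.
  - intros [[DF1 DF2] [DG1 DG2]]. split.
    + intros R HR. destruct (DG1 R HR) as [R' [HR' E']].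
      exists R'. split; auto. eapply ray_mono; eauto.
    + intros R1 R2 H1 H2. split; [apply re_mono; auto|].
      intro E.
      destruct (DF1 R1 H1) as [Q1 [HQ1 E1]].
      destruct (DF1 R2 H2) as [Q2 [HQ2 E2]].
      assert (EQ : ray_equiv G Q1 Q2).
      { eapply re_trans; [apply (re_mono _ _ _ _ SFG E1)|].
        eapply re_trans; [exact E|]. apply re_sym. apply (re_mono _ _ _ _ SFG E2). }
      apply (DG2 _ _ HQ1 HQ2) in EQ. apply (DF2 _ _ HQ1 HQ2) in EQ.
      eapply re_trans; [apply re_sym; exact E1|].
      eapply re_trans; [exact EQ|exact E2].
  - intros [[FG1 FG2] [DG1 DG2]]. split.
    + intros R HR. destruct (DG1 R (ray_mono _ _ _ SFG HR)) as [Q [HQ E]].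
      exists Q. split; auto. apply FG2; auto. eapply ray_mono; eauto.
    + intros R1 R2 H1 H2. rewrite DG2 by auto.
      symmetry. apply FG2; eapply ray_mono; eauto.
Qed.
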